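(* Let $n,k$ be positive integers with $T_k(n)\neq\emptyset$. Let $G\in T_k(n)$ and let $z$ be a quasi vertex of $G$. If $\alpha<0$ and ${}^0R_{\alpha}(G)$ is minimum over $T_k(n)$, then $d(z)=n-1$. If $\alpha>0$ and ${}^0R_{\alpha}(G)$ is maximum over $T_k(n)$, then $d(z)=n-1$.
   Context: All graphs are finite, simple, undirected and connected. For a graph $G$ and real $\alpha\neq 0$, the zeroth-order general Randić index is ${}^0R_{\alpha}(G)=\sum_{v\in V(G)}d(v)^{\alpha}$, where $d(v)$ is the degree of $v$. A connected graph $G$ is a $k$-generalized quasi tree if there is a subset $V_k\subset V(G)$ with $|V_k|=k$ such that $G-V_k$ is a tree, but for every subset $V_{k-1}\subset V(G)$ with $|V_{k-1}|=k-1$, $G-V_{k-1}$ is not a tree; the vertices of such a set $V_k$ are called quasi vertices of $G$. $T_k(n)$ denotes the class of $k$-generalized quasi trees of order $n$. *)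

(* Defs.v *)
From Stdlib Require Import Reals.
From mathcomp Require Import all_boot.
Set Implicit Arguments. Unset Strict Implicit. Unset Printing Implicit Defensive.

Section Graphs.
Variable T : finType.

Definition simple_graph (e : rel T) : Prop := symmetric e /\ irreflexive e.

Definition deg (e : rel T) (v : T) : nat := #|[set u | e v u]|.

Definition induced (e : rel T) (S : {set T}) : rel T :=
  [rel x y | [&& e x y, x \in S & y \in S]].

Definition connected_on (e : rel T) (S : {set T}) : Prop :=
  forall x y, x \in S -> y \in S -> connect (induced e S) x y.

Definition acyclic_on (e : rel T) (S : {set T}) : Prop :=
  forall p : seq T, uniq p -> 3 <= size p -> {subset p <= S} -> ~~ cycle e p.

Definition tree_on (e : rel T) (S : {set T}) : Prop :=
  S != set0 /\ connected_on e S /\ acyclic_on e S.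

Definition connected_graph (e : rel T) : Prop := connected_on e setT.

Definition removal_is_tree (e : rel T) (V : {set T}) : Prop := tree_on e (~: V).

Definition gen_quasi_tree (e : rel T) (k : nat) : Prop :=
  (exists V : {set T}, #|V| = k /\ removal_is_tree e V) /\
  (forall V : {set T}, #|V| = k.-1 -> ~ removal_is_tree e V).

Definition quasi_vertex (e : rel T) (k : nat) (z : T) : Prop :=
  exists V : {set T}, [/\ #|V| = k, z \in V & removal_is_tree e V].

Definition zeroth_randic (alpha : R) (e : rel T) : R :=
  \big[Rplus/R0]_(v : T) Rpower (INR (deg e v)) alpha.
End Graphs.

Definition in_Tk {n : nat} (k : nat) (e : rel 'I_n) : Prop :=
  [/\ simple_graph e, connected_graph e & gen_quasi_tree e k].

(* Main.v *)
From HB Require Import structures.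
Require Import Defs.
From Stdlib Require Import Reals Lra.
From mathcomp Require Import all_boot zify.
Set Implicit Arguments. Unset Strict Implicit. Unset Printing Implicit Defensive.

Lemma Rplus_assoc' : associative Rplus. Proof. by move=> *; rewrite Rplus_assoc. Qed.
HB.instance Definition _ := SemiGroup.isComLaw.Build R Rplus Rplus_assoc' Rplus_comm.

Lemma sum_lt (n : nat) (F G : 'I_n -> R) (z : 'I_n) :
  (forall i, Rle (F i) (G i)) -> Rlt (F z) (G z) ->
  Rlt (\big[Rplus/R0]_(v : 'I_n) F v) (\big[Rplus/R0]_(v : 'I_n) G v).
Proof.
move=> hle hlt.
rewrite (bigD1 z) //= [X in Rlt _ X](bigD1 z) //=.
have : Rle (\big[Rplus/R0]_(i | i != z) F i) (\big[Rplus/R0]_(i | i != z) G i).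
  apply: (big_ind2 (fun a b => Rle a b)) => //; first lra.
  move=> *; lra.
move=> H; exact: Rplus_lt_le_compat.
Qed.

Lemma rpow_mono (alpha : R) (a b : nat) : (0 < a)%N -> (a <= b)%N ->
  (Rlt 0 alpha -> Rle (Rpower (INR a) alpha) (Rpower (INR b) alpha) /\
     ((a < b)%N -> Rlt (Rpower (INR a) alpha) (Rpower (INR b) alpha))) /\
  (Rlt alpha 0 -> Rle (Rpower (INR b) alpha) (Rpower (INR a) alpha) /\
     ((a < b)%N -> Rlt (Rpower (INR b) alpha) (Rpower (INR a) alpha))).
Proof.
move=> ha hab.
have Ha : Rlt 0 (INR a) by apply: lt_0_INR; apply/ltP.
have strict : (a < b)%N -> Rlt (ln (INR a)) (ln (INR b)).
  by move=> h; apply: ln_increasing => //; apply: lt_INR; apply/ltP.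
have hs : (a < b)%N \/ a = b by case: (ltngtP a b) hab => //; auto.
rewrite /Rpower; split=> hal.
- have st : (a < b)%N -> Rlt (exp (alpha * ln (INR a))) (exp (alpha * ln (INR b))).
    move=> h; apply: exp_increasing; have := strict h; nra.
  split=> //; case: hs => [h|->]; [left; exact: st|right=>//].
- have st : (a < b)%N -> Rlt (exp (alpha * ln (INR b))) (exp (alpha * ln (INR a))).
    move=> h; apply: exp_increasing; have := strict h; nra.
  split=> //; case: hs => [h|->]; [left; exact: st|right=>//].
Qed.
Lemma conn_edge (T : finType) (e : rel T) S x y :
  connect (induced e S) x y -> x != y -> exists2 u, e x u & u \in S.
Proof.
case/connectP => [[|u p]] /=; first by move=> _ ->; rewrite eqxx.
by case/andP => /and3P[? ? ?] _ _ _; exists u.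
Qed.

Lemma no_tri (T : finType) (e : rel T) S x y w : acyclic_on e S ->
  x \in S -> y \in S -> w \in S -> x != y -> y != w -> x != w ->
  e x y -> e y w -> e w x -> False.
Proof.
move=> hac xS yS wS xy yw xw exy eyw ewx.
have hu : uniq [:: x; y; w] by rewrite /= !inE negb_or xy xw yw.
have hs : {subset [:: x; y; w] <= S} by move=> u; rewrite !inE => /or3P[]/eqP->.
by have := hac _ hu isT hs; rewrite /= exy eyw ewx.
Qed.

Definition full (T : finType) (e : rel T) (V : {set T}) : rel T :=
  fun x y => (x != y) && [|| e x y, x \in V | y \in V].

Lemma full_in_Tk' (T : finType) k (e : rel T) (V : {set T}) :
  simple_graph e -> #|V| = k -> (0 < k)%N -> removal_is_tree e V ->
  (2 <= #|~: V|)%N -> [/\ simple_graph (full e V), connected_graph (full e V) & gen_quasi_tree (full e V) k].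
Proof.
move=> [hsym hirr] hV hk [hne [hcon hac]] h2.
have [v0 v0V] : exists v0, v0 \in V by apply/card_gt0P; rewrite hV.
have neqe : forall a b, e a b -> a != b.
  by move=> a b eab; apply/eqP => ab; subst; rewrite hirr in eab.
split.
- split.
  + move=> x y; rewrite /full eq_sym hsym; congr (_ && _).
    by case: (x \in V); case: (y \in V); rewrite ?orbT ?orbF.
  + by move=> x; rewrite /full eqxx.
- have c1 : forall x, connect (induced (full e V) setT) x v0.
    move=> x; case: (eqVneq x v0) => [->|xv]; first exact: connect0.
    by apply: connect1; rewrite /induced /= !inE /full xv v0V !orbT.
  have c2 : forall x, connect (induced (full e V) setT) v0 x.
    move=> x; case: (eqVneq v0 x) => [->|xv]; first exact: connect0.
    by apply: connect1; rewrite /induced /= !inE /full xv v0V !orbT.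
  by move=> x y _ _; apply: connect_trans (c1 x) (c2 y).
- split.
  + exists V; split=> //; split=> //; split.
    * move=> x y hx hy; apply: (connect_sub _ (hcon x y hx hy)) => a b /= /and3P[eab ha hb].
      by apply: connect1; rewrite /induced /= ha hb /full eab neqe.
    * move=> p up sp hsub.
      rewrite (@eq_in_cycle _ [pred x | x \in ~: V] _ e); first exact: hac.
        move=> a b; rewrite !inE /= => ha hb; rewrite /full (negbTE ha) (negbTE hb) !orbF.
        by case eab: (e a b); rewrite ?andbF // neqe.
      by apply/allP => x /hsub.
  + move=> U hU [_ [_ hac']].
    have hID := cardsID U V.
    have hIU : (#|V :&: U| <= #|U|)%N by apply: subset_leq_card; apply: subsetIr.
    have hC := cardsC U. have hCV := cardsC V. 
    have hU' : #|U|.+1 = k by rewrite hU prednK.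
    case: (leqP 2 #|V :\: U|) => hVU.
    * have [v vVU] : exists v, v \in V :\: U by apply/card_gt0P; lia.
      have := cardsD1 v (V :\: U); rewrite vVU => hd.
      have [v' v'VU] : exists v', v' \in (V :\: U) :\ v by apply/card_gt0P; lia.
      have := cardsD1 v (~: U); have := cardsD1 v' (~: U :\ v) => hd1 hd2.
      have [c cU] : exists c, c \in (~: U :\ v) :\ v'.
        apply/card_gt0P; have b1 := leq_b1 (v' \in ~: U :\ v); have b2 := leq_b1 (v \in ~: U); move: hC; rewrite hd2 hd1 => hC. lia.
      move: vVU v'VU cU; rewrite !inE => /andP[vU vV] /and3P[v'v v'U v'V] /and3P[cv' cv cU].
      apply: (no_tri hac' (x := v) (y := v') (w := c)); rewrite ?inE //.
      - by rewrite eq_sym.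
      - by rewrite eq_sym.
      - by rewrite eq_sym.
      - by rewrite /full eq_sym v'v vV !orbT.
      - by rewrite /full eq_sym cv' v'V !orbT.
      - by rewrite /full cv vV !orbT.
    * have hUV : U \subset V.
        have : V :&: U == U by rewrite eqEcard subsetIr; lia.
        by move/eqP <-; apply: subsetIl.
      have [v vVU] : exists v, v \in V :\: U by apply/card_gt0P; lia.
      have [a aV] : exists a, a \in ~: V by apply/card_gt0P; lia.
      have := cardsD1 a (~: V); rewrite aV => hd.
      have [b bV] : exists b, b \in ~: V :\ a by apply/card_gt0P; lia.
      move: bV; rewrite inE => /andP[ba bV].
      have ab : a != b by rewrite eq_sym; move: ba; rewrite inE.
      have [a' eaa' a'V] := conn_edge (hcon a b aV bV) ab.
      have nU : forall x, x \in ~: V -> x \in ~: U.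
        by move=> x; rewrite !inE; apply: contra => /(subsetP hUV).
      move: vVU; rewrite !inE => /andP[vU vV].
      have nv : forall x, x \in ~: V -> v != x.
        by move=> x; rewrite inE; apply: contraNneq => <-.
      have hva := nv a aV. have hva' := nv a' a'V.
      have haa' := neqe _ _ eaa'.
      apply: (no_tri hac' _ (nU _ aV) (nU _ a'V) hva haa' hva').
      - by rewrite inE.
      - by rewrite /full hva vV !orbT.
      - by rewrite /full eaa' haa'.
      - by rewrite /full eq_sym hva' vV !orbT.
Qed.

Lemma full_in_Tk n k (e : rel 'I_n) (V : {set 'I_n}) :
  simple_graph e -> #|V| = k -> (0 < k)%N -> removal_is_tree e V ->
  (2 <= #|~: V|)%N -> in_Tk k (full e V).
Proof. move=> *; exact: full_in_Tk'. Qed.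

Lemma two_le (T : finType) k (e : rel T) (V : {set T}) :
  simple_graph e -> connected_graph e -> gen_quasi_tree e k -> #|V| = k ->
  (0 < k)%N -> removal_is_tree e V -> (2 <= #|~: V|)%N.
Proof.
move=> [hsym hirr] hcon [_ hno] hV hk [hne _].
rewrite leqNgt; apply/negP => h1.
have : #|~: V| == 1 by move: hne; rewrite -card_gt0; lia.
case/cards1P => t ht.
have [u0 u0V] : exists u0, u0 \in V by apply/card_gt0P; rewrite hV.
have tu0 : t != u0.
  apply/eqP => ?; subst.
  have : u0 \in ~: V by rewrite ht set11.
  by rewrite inE u0V.
have [u etu _] := conn_edge (hcon t u0 (in_setT t) (in_setT u0)) tu0.
have hx : forall x, (x \notin V) = (x == t) by move=> x; rewrite -in_setC ht inE.
have uV : u \in V.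
  apply/negPn/negP; rewrite hx => /eqP hu; subst.
  by rewrite hirr in etu.
have mem : forall x, (x \in ~: (V :\ u)) = (x == u) || (x == t).
  by move=> x; rewrite !inE negb_and negbK hx.
apply: (hno (V :\ u)).
  by move: hV; rewrite (cardsD1 u) uV /= add1n => <-.
split; first by apply/set0Pn; exists u; rewrite mem eqxx.
split.
- have etu' : e u t by rewrite hsym.
  move=> x y; rewrite !mem => /orP[]/eqP-> /orP[]/eqP->; try exact: connect0;
    apply: connect1; rewrite /induced /= !mem !eqxx ?orbT ?andbT /=; [exact: etu' | exact: etu].
- move=> p up sp hsub.
  have : (size p <= size [:: u; t])%N.
    apply: uniq_leq_size => // x /hsub; rewrite mem !inE.
    by case/orP=> ->; rewrite ?orbT.
  by move: sp => /= sp; lia.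
Qed.

Theorem mainTheorem7 (n k : nat) (hn : 0 < n) (hk : 0 < k)
  (hne : exists e0 : rel 'I_n, in_Tk k e0)
  (e : rel 'I_n) (he : in_Tk k e) (z : 'I_n) (hz : quasi_vertex e k z)
  (alpha : R) :
  (Rlt alpha 0 ->
     (forall e' : rel 'I_n, in_Tk k e' ->
        Rle (zeroth_randic alpha e) (zeroth_randic alpha e')) ->
     deg e z = n.-1) /\
  (Rlt 0 alpha ->
     (forall e' : rel 'I_n, in_Tk k e' ->
        Rle (zeroth_randic alpha e') (zeroth_randic alpha e)) ->
     deg e z = n.-1).
Proof.
case: hz => V [hV hzV htree].
case: (he) => hsimp hconn hgq.
have [hsym hirr] := hsimp.
have h2 := two_le hsimp hconn hgq hV hk htree.
have hT := full_in_Tk hsimp hV hk htree h2.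
have neqe : forall a b, e a b -> a != b.
  by move=> a b eab; apply/eqP => ab; subst; rewrite hirr in eab.
have hdeg_pos : forall v, (0 < deg e v)%N.
  move=> v.
  have hn' := cardsC V; rewrite card_ord in hn'.
  have : (0 < #|[set~ v]|)%N by rewrite cardsC1 card_ord; lia.
  case/card_gt0P => w; rewrite !inE => wv.
  have vw : v != w by rewrite eq_sym.
  have [u evu _] := conn_edge (hconn v w (in_setT v) (in_setT w)) vw.
  by apply/card_gt0P; exists u; rewrite inE.
have hmono : forall v, (deg e v <= deg (full e V) v)%N.
  move=> v; apply: subset_leq_card; apply/subsetP => u; rewrite !inE => evu.
  by rewrite /full evu neqe.
have hfz : deg (full e V) z = n.-1.
  rewrite /deg; transitivity #|[set~ z]|; last by rewrite cardsC1 card_ord.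
  apply: eq_card => u.
  by rewrite !inE /full hzV orbT andbT eq_sym.
have hez : (deg e z <= n.-1)%N by rewrite -hfz; exact: hmono.
split => hal hext; case: (eqVneq (deg e z) n.-1) => // hne'; exfalso;
  have hlt : (deg e z < deg (full e V) z)%N by rewrite hfz ltn_neqAle hne' hez.
- have := hext _ hT; apply: Rlt_not_le; rewrite /zeroth_randic.
  apply: (sum_lt (z := z)) => [i|].
  + exact: (proj1 ((rpow_mono alpha (hdeg_pos i) (hmono i)).2 hal)).
  + exact: (proj2 ((rpow_mono alpha (hdeg_pos z) (hmono z)).2 hal) hlt).
- have := hext _ hT; apply: Rlt_not_le; rewrite /zeroth_randic.
  apply: (sum_lt (z := z)) => [i|].
  + exact: (proj1 ((rpow_mono alpha (hdeg_pos i) (hmono i)).1 hal)).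
  + exact: (proj2 ((rpow_mono alpha (hdeg_pos z) (hmono z)).1 hal) hlt).
Qed.
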